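(* Let $K\ge 2$, $\eta>0$, and $\mathbf r\in\mathbb R^K$. For $\boldsymbol\theta\in\mathbb R^K$ let $\pi_{\boldsymbol\theta}(a)=\exp(\theta(a))/\sum_{b}\exp(\theta(b))$ be the softmax policy over $K$ actions and define $$\Phi_\eta(\boldsymbol\theta)=\pi_{\boldsymbol\theta}^\top\mathbf r+\frac1\eta\sum_{a}\log\pi_{\boldsymbol\theta}(a).$$ Let $H(\boldsymbol\theta)\in\mathbb R^{K\times K}$ be the Hessian of $\Phi_\eta$ at $\boldsymbol\theta$. Then for all $\boldsymbol\theta\in\mathbb R^K$, all $\mathbf r\in\mathbb R^K$ and all $\mathbf y\in\mathbb R^K$, $$\big|\mathbf y^\top H(\boldsymbol\theta)\mathbf y\big|\le 3\Big(\|\nabla_{\boldsymbol\theta}\Phi_\eta(\boldsymbol\theta)\|_2+\frac{5K}{\eta}\Big)\|\mathbf y\|_2^2 .$$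
   Context: $\Phi_\eta$ is the log-barrier regularized expected reward of a softmax policy in a $K$-armed bandit with mean reward vector $\mathbf r$; $1/\eta$ is the barrier strength. *)

(* Defs.v *)
From HB Require Import structures.
From mathcomp Require Import all_boot all_order all_algebra.
From mathcomp Require Import all_classical all_reals all_analysis.
Set Implicit Arguments. Unset Strict Implicit. Unset Printing Implicit Defensive.
Import Order.TTheory GRing.Theory Num.Theory.
Import numFieldNormedType.Exports.
Local Open Scope ring_scope.

Definition softmax (R : realType) (K : nat) (th : 'rV[R]_K) (a : 'I_K) : R :=
  expR (th 0 a) / \sum_(b < K) expR (th 0 b).

Definition Phi (R : realType) (K : nat) (eta : R) (r : 'rV[R]_K) (th : 'rV[R]_K) : R :=
  \sum_(a < K) softmax th a * r 0 a + eta^-1 * \sum_(a < K) ln (softmax th a).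

Definition ebasis (R : realType) (K : nat) (i : 'I_K) : 'rV[R]_K := delta_mx 0 i.

Definition grad (R : realType) (K : nat) (f : 'rV[R]_K -> R) (th : 'rV[R]_K) : 'rV[R]_K :=
  \row_i derive f th (ebasis R i).

Definition hessian (R : realType) (K : nat) (f : 'rV[R]_K -> R) (th : 'rV[R]_K) : 'M[R]_K :=
  \matrix_(i, j) derive (fun t => derive f t (ebasis R i)) th (ebasis R j).

Definition norm2 (R : realType) (K : nat) (v : 'rV[R]_K) : R :=
  Num.sqrt (\sum_(i < K) v 0 i ^+ 2).

Definition qform (R : realType) (K : nat) (H : 'M[R]_K) (y : 'rV[R]_K) : R :=
  (y *m H *m y^T) 0 0.

(* Main.v *)
Require Import Defs.
From HB Require Import structures.
From mathcomp Require Import all_boot all_order all_algebra.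
From mathcomp Require Import all_classical all_reals all_analysis.
From mathcomp Require Import ring lra.
Import Order.TTheory GRing.Theory Num.Theory.
Import numFieldNormedType.Exports.
Local Open Scope ring_scope.

Section Alg.
Variable R : rcfType.
Variable K : nat.
Implicit Types (c y p g : 'I_K -> R).

Lemma sum_delta' (F : 'I_K -> R) j : \sum_(i < K) F i * (i == j)%:R = F j.
Proof.
rewrite (bigD1 j) //= eqxx mulr1 big1 ?addr0 // => a /negbTE ai.
by rewrite ai mulr0.
Qed.

Lemma sq_le_sum y i : y i ^+ 2 <= \sum_(k < K) y k ^+ 2.
Proof.
rewrite (bigD1 i) //= lerDl sumr_ge0 // => k _; exact: sqr_ge0.
Qed.

Lemma abs_le_sqrt y i : `|y i| <= Num.sqrt (\sum_(k < K) y k ^+ 2).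
Proof. by rewrite -sqrtr_sqr ler_wsqrtr // sq_le_sum. Qed.

Lemma lagrange c y :
  \sum_(i < K) \sum_(j < K) (c i * y j - c j * y i) ^+ 2 =
  2 * ((\sum_(i < K) c i ^+ 2) * (\sum_(i < K) y i ^+ 2) - (\sum_(i < K) c i * y i) ^+ 2).
Proof.
have e : forall i j, (c i * y j - c j * y i) ^+ 2 =
   c i ^+ 2 * y j ^+ 2 + c j ^+ 2 * y i ^+ 2 - 2 * ((c i * y i) * (c j * y j)).
  by move=> i j; ring.
under eq_bigr do under eq_bigr do rewrite e.
under eq_bigr do rewrite sumrB big_split /=.
rewrite sumrB big_split /=.
rewrite [in RHS]expr2 !big_distrlr /=.
rewrite [X in _ + X - _ = _]exchange_big /=.
under [X in _ - X = _]eq_bigr do rewrite -mulr_sumr.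
rewrite -mulr_sumr; ring.
Qed.

Lemma CS c y : `|\sum_(i < K) c i * y i| <=
   Num.sqrt (\sum_(i < K) c i ^+ 2) * Num.sqrt (\sum_(i < K) y i ^+ 2).
Proof.
rewrite -sqrtrM ?sumr_ge0 // => [|i _]; last exact: sqr_ge0.
rewrite -sqrtr_sqr ler_wsqrtr //.
have := lagrange c y.
have : 0 <= \sum_(i < K) \sum_(j < K) (c i * y j - c j * y i) ^+ 2.
  by apply: sumr_ge0 => i _; apply: sumr_ge0 => j _; exact: sqr_ge0.
move=> h1 h2; rewrite h2 in h1; lra.
Qed.


Lemma final_bound p g y (e : R) :
  (0 < K)%N -> 0 < e -> (forall i, 0 <= p i) -> \sum_(i < K) p i = 1 ->
  `| \sum_(i < K) y i ^+ 2 * (g i - e * K%:R * p i)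
     - 2 * (\sum_(i < K) g i * y i) * (\sum_(i < K) p i * y i)
     + e * K%:R * (\sum_(i < K) p i * y i) ^+ 2 |
  <= 3 * (Num.sqrt (\sum_(i < K) (g i + e * (1 - K%:R * p i)) ^+ 2) + 5 * K%:R * e)
       * Num.sqrt (\sum_(i < K) y i ^+ 2) ^+ 2.
Proof.
move=> K0 e0 p0 p1.
set c := fun i => g i + e * (1 - K%:R * p i).
set N := Num.sqrt _. set Y := \sum_(i < K) y i ^+ 2.
have Y0 : 0 <= Y by apply: sumr_ge0 => i _; exact: sqr_ge0.
set s := Num.sqrt Y.
have s0 : 0 <= s by exact: sqrtr_ge0.
have N0 : 0 <= N by exact: sqrtr_ge0.
have sY : s ^+ 2 = Y by rewrite sqr_sqrtr.
have K1 : 1 <= K%:R :> R by rewrite ler1n.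
set k := e * K%:R.
have k0 : 0 <= k by rewrite mulr_ge0 // ?ltW // ler0n.
have hp1 i : p i <= 1.
  by rewrite -p1 (bigD1 i) //= lerDl sumr_ge0.
have hw i : `|1 - K%:R * p i| <= K%:R.
  have a1 : 0 <= K%:R * p i by rewrite mulr_ge0 ?ler0n.
  have a2 : K%:R * p i <= K%:R by rewrite ler_piMr ?ler0n.
  rewrite ler_norml; apply/andP; split; lra.
have hy i : `|y i| <= s by exact: abs_le_sqrt.
have hg i : `|g i| <= N + k.
  have -> : g i = c i - e * (1 - K%:R * p i) by rewrite /c; ring.
  apply: (le_trans (ler_normB _ _)); apply: lerD; first exact: (abs_le_sqrt c i).
  by rewrite normrM gtr0_norm // /k ler_pM2l.
set A := \sum_(i < K) y i ^+ 2 * g i.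
set B := \sum_(i < K) p i * y i ^+ 2.
set G := \sum_(i < K) g i * y i.
set P := \sum_(i < K) p i * y i.
have eQ : \sum_(i < K) y i ^+ 2 * (g i - e * K%:R * p i) = A - k * B.
  rewrite /A /B mulr_sumr -sumrB; apply: eq_bigr => i _; rewrite /k; ring.
rewrite eQ.
have hA : `|A| <= (N + k) * Y.
  rewrite /Y mulr_sumr; apply: (le_trans (ler_norm_sum _ _ _)); apply: ler_sum => i _.
  by rewrite normrM ger0_norm ?sqr_ge0 // mulrC ler_wpM2r ?sqr_ge0.
have hB0 : 0 <= B by apply: sumr_ge0 => i _; rewrite mulr_ge0 ?sqr_ge0.
have hB : B <= Y.
  have -> : Y = \sum_(i < K) p i * Y by rewrite -mulr_suml p1 mul1r.
  by apply: ler_sum => i _; rewrite ler_wpM2l // sq_le_sum.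
have hP : `|P| <= s.
  have -> : s = \sum_(i < K) p i * s by rewrite -mulr_suml p1 mul1r.
  apply: (le_trans (ler_norm_sum _ _ _)); apply: ler_sum => i _.
  by rewrite normrM ger0_norm // ler_wpM2l.
have hSy : `|\sum_(i < K) y i| <= K%:R * s.
  apply: (le_trans (ler_norm_sum _ _ _)).
  have -> : K%:R * s = \sum_(i < K) s by rewrite sumr_const card_ord mulr_natl.
  by apply: ler_sum => i _.
have hG : `|G| <= N * s + 2 * k * s.
  have -> : G = \sum_(i < K) c i * y i - e * (\sum_(i < K) y i - K%:R * P).
    rewrite /G /P mulr_sumr -!sumrB mulr_sumr -sumrB; apply: eq_bigr => i _.
    rewrite /c; ring.
  apply: (le_trans (ler_normB _ _)); apply: lerD; first exact: CS.
  rewrite normrM gtr0_norm // /k.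
  have -> : 2 * (e * K%:R) * s = e * (2 * K%:R * s) by ring.
  rewrite ler_pM2l //.
  apply: (le_trans (ler_normB _ _)).
  rewrite normrM ger0_norm ?ler0n //.
  have : K%:R * `|P| <= K%:R * s by rewrite ler_wpM2l ?ler0n.
  lra.
have hGP : `|G| * `|P| <= (N * s + 2 * k * s) * s.
  by apply: ler_pM.
have hP2 : P ^+ 2 <= Y.
  by rewrite -sY -real_normK ?num_real // lerXn2r ?nnegrE.
have e1 : (N * s + 2 * k * s) * s = N * Y + 2 * (k * Y) by rewrite -sY; ring.
rewrite sY.
have hQ : `|A - k * B - 2 * G * P + k * P ^+ 2| <= `|A| + k * B + 2 * (`|G| * `|P|) + k * P ^+ 2.
  have t1 : `|A - k * B| <= `|A| + k * B.
    have := ler_normB A (k * B).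
    by rewrite normrM (ger0_norm k0) (ger0_norm hB0).
  have t2 : `|2 * G * P| = 2 * (`|G| * `|P|).
    by rewrite -mulrA normrM normrM ger0_norm.
  have t3 : `|k * P ^+ 2| = k * P ^+ 2 by rewrite ger0_norm // mulr_ge0 // sqr_ge0.
  have := ler_normD (A - k * B - 2 * G * P) (k * P ^+ 2).
  have := ler_normB (A - k * B) (2 * G * P).
  lra.
apply: (le_trans hQ).
have kB : k * B <= k * Y by rewrite ler_wpM2l.
have kP : k * P ^+ 2 <= k * Y by rewrite ler_wpM2l.
have NkY : 0 <= k * Y by rewrite mulr_ge0.
rewrite e1 in hGP.
have hA' : `|A| <= N * Y + k * Y by rewrite -mulrDl.
have -> : 3 * (N + 5 * K%:R * e) * Y = 3 * (N * Y) + 15 * (k * Y) by rewrite /k; ring.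
lra.
Qed.

Lemma qform_eq (H : 'M[R]_K) (y : 'rV[R]_K) (a g p : 'I_K -> R) k :
 (forall i j, H i j = (i == j)%:R * a i - (g i * p j + p i * g j) + k * (p i * p j)) ->
 (y *m H *m y^T) 0 0 = \sum_(i < K) y 0 i ^+ 2 * a i
   - 2 * (\sum_(i < K) g i * y 0 i) * (\sum_(i < K) p i * y 0 i)
   + k * (\sum_(i < K) p i * y 0 i) ^+ 2.
Proof.
move=> hH; rewrite !mxE.
set G := \sum_(i < K) g i * y 0 i; set P := \sum_(i < K) p i * y 0 i.
have inner j : (y *m H) 0 j = y 0 j * a j - (G * p j + P * g j) + k * P * p j.
  rewrite !mxE.
  rewrite (eq_bigr (fun i => (y 0 i * a i) * (i == j)%:R - (p j * (g i * y 0 i) + g j * (p i * y 0 i))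
       + k * p j * (p i * y 0 i))); last by move=> i _; rewrite hH; ring.
  rewrite big_split sumrB big_split /= sum_delta' -!mulr_sumr -/G -/P; ring.
rewrite (eq_bigr (fun j => y 0 j ^+ 2 * a j - (G * (p j * y 0 j) + P * (g j * y 0 j)) + k * P * (p j * y 0 j))); last first.
  by move=> j _; rewrite inner mxE; ring.
rewrite big_split sumrB big_split /= -!mulr_sumr -/G -/P; ring.
Qed.
End Alg.

Section Ssum.
Variable R : realType.
Variable V : normedModType R.
Implicit Types (f g : V -> R) (x v : V).

Lemma isd_ext f g x v df : (forall t, f t = g t) -> is_derive x v f df -> is_derive x v g df.
Proof. by move=> e; have -> : f = g by apply/funext. Qed.

Lemma isdM f g x v df dg : is_derive x v f df -> is_derive x v g dg ->
  is_derive x v (fun t => f t * g t) (f x * dg + g x * df).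
Proof. by move=> h1 h2; have := is_deriveM h1 h2. Qed.

Lemma isdD f g x v df dg : is_derive x v f df -> is_derive x v g dg ->
  is_derive x v (fun t => f t + g t) (df + dg).
Proof. by move=> h1 h2; have := is_deriveD h1 h2. Qed.

Lemma isdB f g x v df dg : is_derive x v f df -> is_derive x v g dg ->
  is_derive x v (fun t => f t - g t) (df - dg).
Proof. by move=> h1 h2; have := is_deriveB h1 h2. Qed.

Lemma isdC (k : R) x v : is_derive x v (fun _ : V => k) 0.
Proof. exact: is_derive_cst. Qed.

Lemma isdS n (h : 'I_n -> V -> R) x v dh : (forall i, is_derive x v (h i) (dh i)) ->
  is_derive x v (fun t => \sum_(i < n) h i t) (\sum_(i < n) dh i).
Proof.
move=> H; have := is_derive_sum H; apply: isd_ext => t.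
by rewrite fct_sumE.
Qed.

Lemma isdV f x v df : f x != 0 -> is_derive x v f df ->
  is_derive x v (fun t => (f t)^-1) (- (f x)^-2 * df).
Proof.
move=> fx [d dv]; apply: DeriveDef; first exact: derivableV.
by rewrite deriveV // dv.
Qed.

Lemma derive_line (F : V -> R) x v :
  'D_v F x = 'D_1 (fun h : R => F (h *: v + x)) 0.
Proof.
rewrite /derive; set g1 := fun h => h^-1 *: _; set g2 := fun h => h^-1 *: _.
suff -> : g1 = g2 by [].
by rewrite funeqE /g1 /g2 => h /=; rewrite addr0 scale0r add0r [_%:A]mulr1.
Qed.
Lemma is_derive_comp1 (f : V -> R) (g : R -> R) x v df dg :
 is_derive x v f df -> is_derive (f x) 1 g dg -> is_derive x v (g \o f) (dg * df).
Proof.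
move=> [hd hv] hg.
have h1 : is_derive (0:R) 1 (fun h : R => f (h *: v + x)) df.
  apply: DeriveDef. exact: (proj1 (derivable1P f x v) hd). by rewrite -derive_line.
have hg' : is_derive ((fun h : R => f (h *: v + x)) 0) 1 g dg.
  by rewrite /= scale0r add0r.
have := is_derive1_comp hg' h1 => -[d1 v1].
apply: DeriveDef. exact: (proj2 (derivable1P (g \o f) x v) d1).
by rewrite derive_line.
Qed.
End Ssum.
Arguments isd_ext {R V f g x v df}.
Arguments isdM {R V f g x v df dg}.
Arguments isdD {R V f g x v df dg}.
Arguments isdB {R V f g x v df dg}.
Arguments isdC {R V}.
Arguments isdS {R V n h x v dh}.
Arguments isdV {R V f x v df}.
Arguments is_derive_comp1 {R V f g x v df dg}.

Section Soft.
Variable R : realType.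
Variable K : nat.
Notation V := 'rV[R]_K.
Implicit Types (t v w : V).

Lemma isd_coord t v a : is_derive t v (fun t : V => t 0 a) (v 0 a).
Proof.
have d : derivable (@id V) t v by exact: derivable_id.
have := derive_mx d; rewrite derive_id => e.
apply: DeriveDef; first by move/derivable_mxP: d; apply.
by rewrite [in RHS]e mxE.
Qed.

Lemma isd_exp t v a : is_derive t v (fun t : V => expR (t 0 a)) (expR (t 0 a) * v 0 a).
Proof. have := is_derive_comp1 (isd_coord t v a) (is_derive_expR (t 0 a)); exact. Qed.

Definition Ssum t := \sum_(b < K) expR (t 0 b).
Definition pw t w := \sum_(b < K) softmax t b * w 0 b.

Lemma S_gt0 t : (0 < K)%N -> 0 < Ssum t.
Proof.
move=> K0; rewrite /Ssum (bigD1 (Ordinal K0)) //=.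
by rewrite ltr_pwDl ?expR_gt0 // sumr_ge0 // => i _; rewrite expR_ge0.
Qed.

Lemma isd_soft t w a : (0 < K)%N ->
  is_derive t w (fun t => softmax t a) (softmax t a * (w 0 a - pw t w)).
Proof.
move=> K0.
have hS : is_derive t w Ssum (\sum_(b < K) expR (t 0 b) * w 0 b).
  by apply: isdS => b; exact: isd_exp.
have H := isdM (isd_exp t w a) (isdV (lt0r_neq0 (S_gt0 t K0)) hS).
apply: (isd_ext (f:= fun t => expR (t 0 a) * (Ssum t)^-1)) => //.
apply: (is_derive_eq H).
rewrite /pw /softmax -/(Ssum t).
have -> : \sum_(b < K) expR (t 0 b) / Ssum t * w 0 b = (\sum_(b < K) expR (t 0 b) * w 0 b) / Ssum t.
  by rewrite mulr_suml; apply: eq_bigr => b _; rewrite mulrAC.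
have := S_gt0 t K0; set s := Ssum t; set e := expR _; set q := \sum_(b < K) _ => s0.
field; exact: lt0r_neq0.
Qed.

Lemma soft_gt0 t a : (0 < K)%N -> 0 < softmax t a.
Proof. by move=> K0; rewrite /softmax divr_gt0 ?expR_gt0 // S_gt0. Qed.

Variables (eta : R) (r : V).
Definition rb t := \sum_(a < K) softmax t a * r 0 a.
Definition cc a t := softmax t a * (r 0 a - rb t) + eta^-1 * (1 - K%:R * softmax t a).

Lemma isd_Phi t w : (0 < K)%N ->
  is_derive t w (Phi eta r) (\sum_(a < K) cc a t * w 0 a).
Proof.
move=> K0.
have H1 := isdS (fun a => isdM (isd_soft t w a K0) (isdC (r 0 a) t w)).
have H2 := isdM (isdC eta^-1 t w)
  (isdS (fun a => is_derive_comp1 (isd_soft t w a K0) (is_derive1_ln (soft_gt0 t a K0)))).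
have H := isdD H1 H2.
apply: (isd_ext _ (is_derive_eq H _)) => //.
rewrite mulr0 addr0.
under eq_bigr do rewrite mulr0 add0r.
have e1 : \sum_(i < K) (softmax t i)^-1 * (softmax t i * (w 0 i - pw t w)) =
   \sum_(i < K) (w 0 i - pw t w).
  by apply: eq_bigr => i _; rewrite mulKf // lt0r_neq0 // soft_gt0.
rewrite e1 sumrB sumr_const card_ord -mulr_natl.
rewrite (eq_bigr (fun i => softmax t i * r 0 i * w 0 i - pw t w * (softmax t i * r 0 i)));
  last by move=> i _; ring.
rewrite sumrB -mulr_sumr.
rewrite [RHS](eq_bigr (fun i => softmax t i * r 0 i * w 0 i - rb t * (softmax t i * w 0 i) +
   eta^-1 * w 0 i - eta^-1 * K%:R * (softmax t i * w 0 i))); last first.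
  by move=> i _; rewrite /cc; ring.
rewrite sumrB big_split sumrB /= -!mulr_sumr /rb /pw; ring.
Qed.

Lemma eb_entry (i a : 'I_K) : ebasis R i 0 a = (a == i)%:R.
Proof. by rewrite /ebasis mxE eqxx. Qed.

Lemma sum_delta (F : 'I_K -> R) (i : 'I_K) : \sum_(a < K) F a * ebasis R i 0 a = F i.
Proof.
rewrite (bigD1 i) //= eb_entry eqxx mulr1 big1 ?addr0 // => a /negbTE ai.
by rewrite eb_entry ai mulr0.
Qed.

Lemma grad_Phi t (i : 'I_K) : (0 < K)%N -> 'D_(ebasis R i) (Phi eta r) t = cc i t.
Proof. by move=> K0; rewrite (@derive_val _ _ _ _ _ _ _ (isd_Phi t (ebasis R i) K0)) sum_delta. Qed.

Definition gg t i := softmax t i * (r 0 i - rb t).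

Lemma isd_cc t w (i : 'I_K) : (0 < K)%N -> is_derive t w (cc i)
  (softmax t i * (0 - \sum_(a < K) (softmax t a * 0 + r 0 a * (softmax t a * (w 0 a - pw t w))))
   + (r 0 i - rb t) * (softmax t i * (w 0 i - pw t w))
   + (eta^-1 * (0 - (K%:R * (softmax t i * (w 0 i - pw t w)) + softmax t i * 0))
   + (1 - K%:R * softmax t i) * 0)).
Proof.
move=> K0.
have Hrb := isdS (fun a => isdM (isd_soft t w a K0) (isdC (r 0 a) t w)).
have H := isdD (isdM (isd_soft t w i K0) (isdB (isdC (r 0 i) t w) Hrb))
  (isdM (isdC eta^-1 t w) (isdB (isdC 1 t w) (isdM (isdC K%:R t w) (isd_soft t w i K0)))).
exact: H.
Qed.

Lemma hess_entry t (i j : 'I_K) : (0 < K)%N ->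
  hessian (Phi eta r) t i j = (i == j)%:R * (gg t i - eta^-1 * K%:R * softmax t i)
     - (gg t i * softmax t j + softmax t i * gg t j) + eta^-1 * K%:R * (softmax t i * softmax t j).
Proof.
move=> K0; rewrite /hessian mxE.
have -> : (fun t => 'D_(ebasis R i) (Phi eta r) t) = cc i.
  by apply/funext => u; rewrite grad_Phi.
rewrite (@derive_val _ _ _ _ _ _ _ (isd_cc t (ebasis R j) i K0)).
have hpw : pw t (ebasis R j) = softmax t j by rewrite /pw sum_delta.
rewrite hpw !eb_entry.
have -> : \sum_(a < K) (softmax t a * 0 + r 0 a * (softmax t a * (ebasis R j 0 a - softmax t j)))
   = softmax t j * r 0 j - softmax t j * rb t.
  rewrite (eq_bigr (fun a => (softmax t a * r 0 a) * ebasis R j 0 a - softmax t j * (softmax t a * r 0 a))); last first.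
    by move=> a _; ring.
  by rewrite sumrB sum_delta -mulr_sumr /rb.
rewrite /gg eq_sym; ring.
Qed.
End Soft.

Theorem lemma4p1 (R : realType) (K : nat) (hK : (2 <= K)%N) (eta : R) (heta : 0 < eta)
  (r th y : 'rV[R]_K) :
  `| qform (hessian (Phi eta r) th) y |
    <= 3 * (norm2 (grad (Phi eta r) th) + 5 * K%:R / eta) * norm2 y ^+ 2.
Proof.
have K0 : (0 < K)%N by apply: leq_trans hK.
rewrite /qform (@qform_eq R K (hessian (Phi eta r) th) y
   (fun i => gg R K r th i - eta^-1 * K%:R * softmax th i) (gg R K r th)
   (softmax th) (eta^-1 * K%:R)); last by move=> i j; exact: hess_entry.
have hg : norm2 (grad (Phi eta r) th) =
  Num.sqrt (\sum_(i < K) (gg R K r th i + eta^-1 * (1 - K%:R * softmax th i)) ^+ 2).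
  rewrite /norm2; congr Num.sqrt; apply: eq_bigr => i _.
  by rewrite /grad mxE grad_Phi.
rewrite hg /norm2.
have p1 : \sum_(i < K) softmax th i = 1.
  rewrite /softmax -mulr_suml divff //; exact: lt0r_neq0 (S_gt0 R K th K0).
have := @final_bound R K (softmax th) (gg R K r th) (fun i => y 0 i) eta^-1 K0
   (ltac:(by rewrite invr_gt0)) (fun i => ltW (soft_gt0 R K th i K0)) p1.
by rewrite /= mulrA.
Qed.
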